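(* The Minimmit protocol (described in the context) satisfies Consistency: in every execution, if $p_i$ and $p_j$ are correct, then for any timeslots $t$ and $t'$, $\text{log}_i(t)$ and $\text{log}_j(t')$ are compatible, i.e. one is a prefix of the other.
   Context: Setting. There are $n$ processors $\Pi=\{p_0,\dots,p_{n-1}\}$ and an integer $f$ with $5f+1\le n$. At most $f$ processors may be corrupted by an adversary during the execution and then behave arbitrarily (Byzantine); processors never corrupted are called correct. Processors communicate over point-to-point authenticated channels; every message is signed by its sender; a PKI validates signatures and $H$ is a collision-resistant hash function; attention is restricted to executions in which the adversary cannot forge signatures or find hash collisions. Time is divided into timeslots $t\in\mathbb{N}_{\ge 0}$ (partial synchrony): a message sent at time $t$ arrives at some time $t'>t$ with $t'\le \max\{\text{GST},t\}+\Delta$, where $\Delta$ is known to the protocol and GST is unknown and chosen by the adversary (who also chooses delivery times subject to this constraint). Clocks of correct processors advance in real time. When a correct processor sends a message to all processors, it regards that message as immediately received by itself. Transactions are unique messages signed by the environment; each timeslot each processor may receive a finite set of transactions. Each processor $p_i$ maintains an append-only log $\text{log}_i$ of distinct transactions, $\text{log}_i(t)$ denoting its value at the end of timeslot $t$. Blocks. $\text{lead}(v):=p_j$ with $j=v \bmod n$. The genesis block is $b_{\text{gen}}=(0,\lambda,\lambda)$ ($\lambda$ the empty sequence), considered finalised at the start. Any other block is a tuple $b=(v,\text{Tr},h)$ signed by $\text{lead}(v)$, with $v\in\mathbb{N}_{\ge1}$ ($b.\text{view}=v$, ''a view $v$ block''), $\text{Tr}=b.\text{Tr}$ a sequence of distinct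 transactions, and $h=b.h$ a hash value; its parent is the block $b'$ with $H(b')=h$. The ancestors of $b$ are $b$ and the ancestors of its parent ($b_{\text{gen}}$ has only itself). Two blocks are inconsistent if neither is an ancestor of the other. To finalise $b$ means: upon obtaining all ancestors of $b$, the processor sets its log to extend the concatenation of $b'.\text{Tr}$ over ancestors $b'$ of $b$ (with duplicates removed). Messages. A vote for $b$ is $(\text{vote},b)$. An M-notarization for $b$ is a set of $2f+1$ votes for $b$ signed by distinct processors; an L-notarization for $b$ is a set of $n-f$ votes for $b$ signed by distinct processors. A nullify$(v)$ message is $(\text{nullify},v)$; a nullification for view $v$ is a set of $2f+1$ nullify$(v)$ messages signed by distinct processors. Local state of each processor: $\mathtt{S}$, the set of all received messages (automatically updated; it contains a block $b$ if it contains any message having $b$ as an entry; initially it contains only $b_{\text{gen}}$ and an M- and L-notarization for $b_{\text{gen}}$); the current view $\mathtt{v}$ (initially 1; a processor enters view $v$ when $\mathtt{v}$ becomes $v$); a timer $\mathtt{T}$ (initially 0, increasing in real time, reset to 0 upon entering a new view); $\mathtt{nullified}$ (initially false) and $\mathtt{notarized}$ (initially $\bot$, a value different from every block). SelectParent$(\mathtt{S},\mathtt{v})$: let $v'<\mathtt{v}$ be greatest such that $\mathtt{S}$ contains an M-notarization for some block of view $v'$; output the lexicographically least such block. ProposeChild$(b,v)$: form a sequence Tr of distinct transactions containing all transactions received and not in $b'.\text{Tr}$ for any ancestor $b'\in\mathtt{S}$ of $b$, and send the block $(v,\text{Tr},H(b))$ to all processors. $\mathtt{S}$ contains a valid proposal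 $b$ for view $v$ if $\mathtt{S}$ contains (i) precisely one block of the form $b=(v,\text{Tr},h)$ signed by $\text{lead}(v)$, (ii) an M-notarization for some $b'$ with $H(b')=h$, say $b'.\text{view}=v'$, and (iii) a nullification for each view in the open interval $(v',v)$. At timeslot $t$ a nullification $N\subseteq\mathtt{S}$ for a view $v$ is new if $\mathtt{S}$ contained no nullification for $v$ at any earlier timeslot and $N$ is lexicographically least among nullifications for $v$ in $\mathtt{S}$; new M-notarizations and new L-notarizations for a block $b$ are defined analogously. Protocol (Minimmit): at every timeslot, correct $p_i$ does, in order: (1) send new nullifications in $\mathtt{S}$ to all processors; (2) send new M- and L-notarizations in $\mathtt{S}$ to all; (3) if $p_i=\text{lead}(\mathtt{v})$, execute ProposeChild(SelectParent$(\mathtt{S},\mathtt{v}),\mathtt{v})$; (4) if $\mathtt{S}$ contains a valid proposal $b$ for view $\mathtt{v}$ and $\mathtt{notarized}=\bot$ and $\mathtt{nullified}=$ false, set $\mathtt{notarized}:=b$ and send $(\text{vote},b)$ to all; (5) if $\mathtt{T}=2\Delta$, $\mathtt{nullified}=$ false and $\mathtt{notarized}=\bot$, set $\mathtt{nullified}:=$ true and send $(\text{nullify},\mathtt{v})$ to all; (6) if $\mathtt{S}$ contains a nullification for $\mathtt{v}$, set $\mathtt{v}:=\mathtt{v}+1$, $\mathtt{nullified}:=$ false, $\mathtt{notarized}:=\bot$; (7) if $\mathtt{S}$ contains an M-notarization for some $b$ with $b.\text{view}=\mathtt{v}$: if $\mathtt{notarized}=\bot$ and $\mathtt{nullified}=$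 false send $(\text{vote},b)$ to all; then set $\mathtt{v}:=\mathtt{v}+1$, $\mathtt{nullified}:=$ false, $\mathtt{notarized}:=\bot$; (8) if $\mathtt{nullified}=$ false, $\mathtt{notarized}\neq\bot$, and $\mathtt{S}$ contains at least $2f+1$ messages signed by distinct processors, each either $(\text{nullify},\mathtt{v})$ or $(\text{vote},b)$ for some $b$ with $b.\text{view}=\mathtt{v}$ and $b\ne\mathtt{notarized}$, then set $\mathtt{nullified}:=$ true and send $(\text{nullify},\mathtt{v})$ to all; (9) if $\mathtt{S}$ contains a new L-notarization for a block $b$, finalise $b$. The logs of correct processors change only through finalisation. *)

(* Defs.v *)
(* A symbolic (Dolev-Yao style) model of
   executions of the Minimmit protocol. *)
From Stdlib Require List.
From mathcomp Require Import all_boot.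
Set Implicit Arguments. Unset Strict Implicit. Unset Printing Implicit Defensive.

Section Minimmit.

(* transactions (environment-signed, unique) *)
Variable Tx : eqType.

(* Blocks.  Hashes are symbolic: [HashOf b] is H(b) (collision resistance:
   H is injective), [Junk k] are hash values that are the hash of no block. *)
Inductive block : Type :=
| Gen : block                                   (* b_gen = (0, lambda, lambda) *)
| Blk : nat -> seq Tx -> hashv -> block         (* (v, Tr, h), signed by lead(v) *)
with hashv : Type :=
| HashOf : block -> hashv
| Junk : nat -> hashv.

Definition view (b : block) : nat := if b is Blk v _ _ then v else 0.
Definition btr (b : block) : seq Tx := if b is Blk _ tr _ then tr else [::].
Definition parent (b : block) : option block :=
  match b with Blk _ _ (HashOf b') => Some b' | _ => None end.

Fixpoint anc (b : block) : seq block :=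
  match b with
  | Gen => [:: Gen]
  | Blk _ _ h => b :: (match h with HashOf b' => anc b' | Junk _ => [::] end)
  end.

Fixpoint rooted (b : block) : Prop :=
  match b with
  | Gen => True
  | Blk _ _ (HashOf b') => rooted b'
  | Blk _ _ (Junk _) => False
  end.

Fixpoint wfb (b : block) : Prop :=
  match b with
  | Gen => True
  | Blk v tr h => 0 < v /\ uniq tr /\
                  (match h with HashOf b' => wfb b' | Junk _ => True end)
  end.

(* remove duplicates, keeping the first occurrence *)
Definition undup_first (s : seq Tx) : seq Tx := rev (undup (rev s)).

Definition chainTx (b : block) : seq Tx :=
  undup_first (flatten (map btr (rev (anc b)))).

Definition finupd (X L : seq Tx) : seq Tx := if prefix X L then L else X.

(* Atomic signed messages.  [IBlock b] is signed by lead(view b);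
   [IVote j b] = (vote,b) signed by p_j; [INull j v] = (nullify,v) signed by p_j.
   Notarizations / nullifications are sets of such atomic messages. *)
Inductive item : Type :=
| IBlock : block -> item
| IVote : nat -> block -> item
| INull : nat -> nat -> item.

Definition msg := seq item.
Definition iset := item -> Prop.

Definition wf_item (x : item) : Prop :=
  match x with
  | IBlock b => wfb b
  | IVote j b => wfb b
  | INull j v => True
  end.

Variables n f : nat.

Definition lead (v : nat) : nat := v %% n.

Definition signer_ok (j : nat) : bool := j < n.

(* S contains a message (a block is contained in S if some message of S has
   it as an entry) *)
Definition inS (S : iset) (x : item) : Prop :=
  S x \/ exists b j, x = IBlock b /\ S (IVote j b).
Definition hasBlock (S : iset) (b : block) : Prop := inS S (IBlock b).

Definition signers (P : nat -> Prop) (k : nat) : Prop :=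
  exists J : seq nat, [/\ uniq J, size J = k, all (fun j => j < n) J &
                          forall j, j \in J -> P j].

Definition hasM (S : iset) (b : block) : Prop :=
  signers (fun j => S (IVote j b)) (2 * f + 1).
Definition hasL (S : iset) (b : block) : Prop :=
  signers (fun j => S (IVote j b)) (n - f).
Definition hasN (S : iset) (v : nat) : Prop :=
  signers (fun j => S (INull j v)) (2 * f + 1).

Definition least (P : nat -> Prop) (k : nat) (J : seq nat) : Prop :=
  [/\ sorted ltn J, size J = k, all (fun j => j < n) J,
      (forall j, j \in J -> P j) &
      (forall j, j < n -> P j -> j \notin J -> forall j', j' \in J -> j' < j)].

(* messages sent in steps (1) and (2): new nullifications and new M- and
   L-notarizations ([old] = contents of S at earlier timeslots) *)
Definition out12 (S old : iset) (m : msg) : Prop :=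
  (exists w J, [/\ hasN S w, ~ hasN old w,
                 least (fun j => S (INull j w)) (2 * f + 1) J &
                 m = map (fun j => INull j w) J]) \/
  (exists b J, [/\ hasM S b, ~ hasM old b,
                 least (fun j => S (IVote j b)) (2 * f + 1) J &
                 m = map (fun j => IVote j b) J]) \/
  (exists b J, [/\ hasL S b, ~ hasL old b,
                 least (fun j => S (IVote j b)) (n - f) J &
                 m = map (fun j => IVote j b) J]).

(* SelectParent(S, v) = b, w.r.t. the lexicographic order lexlt on blocks *)
Definition selpar (lexlt : block -> block -> Prop) (S : iset) (v : nat)
  (b : block) : Prop :=
  [/\ hasM S b, view b < v,
      (forall b', hasM S b' -> view b' < v -> view b' <= view b) &
      (forall b', hasM S b' -> view b' = view b -> b' <> b -> lexlt b b')].

(* ProposeChild(SelectParent(S,v), v) creates block B; rtx = all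
   transactions received so far *)
Definition propose (lexlt : block -> block -> Prop) (S : iset) (rtx : seq Tx)
  (v : nat) (B : block) : Prop :=
  exists b Tr, [/\ selpar lexlt S v b, uniq Tr,
    (forall tx, tx \in Tr <->
       (tx \in rtx /\
        ~ exists b', [/\ List.In b' (anc b), hasBlock S b' & tx \in btr b'])) &
    B = Blk v Tr (HashOf b)].

Definition valid (S : iset) (v : nat) (b : block) : Prop :=
  [/\ hasBlock S b, view b = v,
      (forall b', hasBlock S b' -> view b' = v -> b' = b) &
      exists b', [/\ parent b = Some b', hasM S b' &
                     forall w, view b' < w < v -> hasN S w]].

Definition obtained (S : iset) (b : block) : Prop :=
  rooted b /\ forall b', List.In b' (anc b) -> hasBlock S b'.

Definition addo (S : iset) (o : option item) : iset :=
  fun x => S x \/ o = Some x.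

Record lstate := LS {
  lS : iset;
  lv : nat;
  lent : nat;                (* timeslot at which the current view was entered
                                (timer T = t - lent) *)
  lnull : bool;
  lnot : option block;       (* notarized (None = bottom) *)
  lpend : block -> Prop;     (* blocks to be finalised once all ancestors
                                are obtained *)
  llog : seq Tx
}.

Definition init_state : lstate :=
  {| lS := fun x => exists2 j, j < n & x = IVote j Gen;
     lv := 1; lent := 0; lnull := false; lnot := None;
     lpend := fun _ => False; llog := [::] |}.

(* One timeslot t of correct processor p_i: steps (1)-(9) in order.
   pre = state at the end of the previous timeslot, R = messages received at
   t, rtx = transactions received up to t, post = state at the end of t,
   out = messages sent (to all) during t. *)
Definition slot (lexlt : block -> block -> Prop) (Delta i t : nat)
  (pre : lstate) (R : seq msg) (rtx : seq Tx) (post : lstate)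
  (out : msg -> Prop) : Prop :=
  let old : iset := fun x => t <> 0 /\ lS pre x in
  let S1 : iset := fun x => lS pre x \/ exists m, List.In m R /\ List.In x m in
  let v := lv pre in
  exists (prop3 vote4 vote7 : option block) (null5 null8 nd6 nd7 : bool)
         (nt6 nt7 : option block) (v6 e6 v7 e7 : nat) (fl : seq block),
  (* (3) *)
  (if i == lead v then exists B, prop3 = Some B /\ propose lexlt S1 rtx v B
   else prop3 = None) /\
  (let S3 := addo S1 (omap IBlock prop3) in
  (* (4) *)
  let c4 := (exists b, valid S3 v b) /\ lnot pre = None /\ lnull pre = false in
  (c4 -> exists b, valid S3 v b /\ vote4 = Some b) /\
  (~ c4 -> vote4 = None) /\
  (let nt4 := if vote4 is Some b then Some b else lnot pre in
  let S4 := addo S3 (omap (IVote i) vote4) in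
  (* (5) *)
  null5 = [&& t - lent pre == 2 * Delta, ~~ lnull pre & ~~ isSome nt4] /\
  (let nd5 := lnull pre || null5 in
  let S5 := addo S4 (if null5 then Some (INull i v) else None) in
  (* (6) *)
  (hasN S5 v -> [/\ v6 = v.+1, e6 = t, nd6 = false & nt6 = None]) /\
  (~ hasN S5 v -> [/\ v6 = v, e6 = lent pre, nd6 = nd5 & nt6 = nt4]) /\
  (* (7) *)
  let c7 := exists b, view b = v6 /\ hasM S5 b in
  (c7 -> exists b, [/\ view b = v6, hasM S5 b,
            vote7 = (if ~~ isSome nt6 && ~~ nd6 then Some b else None),
            v7 = v6.+1 & [/\ e7 = t, nd7 = false & nt7 = None]]) /\
  (~ c7 -> [/\ vote7 = None, v7 = v6, e7 = e6, nd7 = nd6 & nt7 = nt6]) /\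
  (let S7 := addo S5 (omap (IVote i) vote7) in
  (* (8) *)
  let c8 := [/\ nd7 = false, isSome nt7 &
              signers (fun j => S7 (INull j v7) \/
                                exists b, [/\ S7 (IVote j b), view b = v7 &
                                              nt7 <> Some b]) (2 * f + 1)] in
  (c8 -> null8 = true) /\ (~ c8 -> null8 = false) /\
  (let S8 := addo S7 (if null8 then Some (INull i v7) else None) in
  (* (9) and finalisation *)
  let pend := fun b => lpend pre b \/ (hasL S8 b /\ ~ hasL old b) in
  List.NoDup fl /\
  (forall b, List.In b fl <-> pend b /\ obtained S8 b) /\
  post = {| lS := S8; lv := v7; lent := e7; lnull := nd7 || null8; lnot := nt7;
            lpend := fun b => pend b /\ ~ obtained S8 b;
            llog := foldl (fun L b => finupd (chainTx b) L) (llog pre) fl |} /\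
  (forall m, out m <->
     out12 S1 old m \/
     (exists B, prop3 = Some B /\ m = [:: IBlock B]) \/
     (exists b, vote4 = Some b /\ m = [:: IVote i b]) \/
     (null5 /\ m = [:: INull i v]) \/
     (exists b, vote7 = Some b /\ m = [:: IVote i b]) \/
     (null8 /\ m = [:: INull i v7]))))))).

(* An execution: global stabilisation time, the set of (eventually) corrupted
   processors, transaction inputs, message deliveries (recipient, timeslot),
   local states of processors at the end of each timeslot, messages sent. *)
Record execution := Exec {
  GST : nat;
  corrupt : nat -> bool;
  txin : nat -> nat -> seq Tx;
  deliv : nat -> nat -> seq msg;
  st : nat -> nat -> lstate;
  sent : nat -> nat -> msg -> Prop
}.

Definition correct (E : execution) (j : nat) : Prop := j < n /\ ~~ corrupt E j.

Definition received_tx (E : execution) (i t : nat) : seq Tx :=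
  flatten [seq txin E i s | s <- iota 0 t.+1].

Definition sent_before (E : execution) (j t : nat) (x : item) : Prop :=
  exists t0 m0, [/\ t0 < t, sent E j t0 m0 & List.In x m0].

(* unforgeability of signatures: an item whose signer is correct was sent
   earlier by that signer *)
Definition blk_auth (E : execution) (t : nat) (b : block) : Prop :=
  b = Gen \/ corrupt E (lead (view b)) \/
  sent_before E (lead (view b)) t (IBlock b).

Definition authentic (E : execution) (t : nat) (x : item) : Prop :=
  match x with
  | IBlock b => blk_auth E t b
  | IVote j b => j < n /\ blk_auth E t b /\
                 (b = Gen \/ corrupt E j \/ sent_before E j t (IVote j b))
  | INull j w => j < n /\ (corrupt E j \/ sent_before E j t (INull j w))
  end.

Definition is_execution (lexlt : block -> block -> Prop) (Delta : nat)
  (E : execution) : Prop :=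
  [/\ count (corrupt E) (iota 0 n) <= f,
      (forall i t, correct E i ->
         slot lexlt Delta i t (if t is t'.+1 then st E i t' else init_state)
              (deliv E i t) (received_tx E i t) (st E i t) (sent E i t)),
      (forall i t m, correct E i -> sent E i t m ->
         forall k, k < n -> k <> i ->
         exists t', [/\ t < t', t' <= maxn (GST E) t + Delta &
                        List.In m (deliv E k t')]) &
      (forall k t m x, correct E k -> List.In m (deliv E k t) ->
         List.In x m -> wf_item x /\ authentic E t x)].

End Minimmit.

Definition strict_total_order (T : Type) (lt : T -> T -> Prop) : Prop :=
  [/\ forall x, ~ lt x x,
      forall x y z, lt x y -> lt y z -> lt x z &
      forall x y, x <> y -> lt x y \/ lt y x].

(* Main.v *)
Require Import Defs.
From Stdlib Require List.
From Stdlib Require Import Classical.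
From mathcomp Require Import all_boot.
From Stdlib Require Import Lia.
From mathcomp Require Import zify.
Set Implicit Arguments. Unset Strict Implicit. Unset Printing Implicit Defensive.

Lemma In_mem (T : eqType) (x : T) s : List.In x s -> x \in s.
Proof. elim: s => //= a s IH [->|/IH]; rewrite inE ?eqxx // => ->; by rewrite orbT. Qed.

Lemma mem_In (T : eqType) (x : T) s : x \in s -> List.In x s.
Proof. elim: s => //= a s IH; rewrite inE => /orP [/eqP ->|/IH]; auto. Qed.

Lemma signers_mono {n} {P Q : nat -> Prop} {k} :
  signers n P k -> (forall j, P j -> Q j) -> signers n Q k.
Proof. move=> [J [U S A H]] PQ; exists J; split => // j /H; exact: PQ. Qed.

Section Proof.
Variable Tx : eqType.
Variables n f Delta : nat.
Variable lexlt : block Tx -> block Tx -> Prop.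
Variable E : execution Tx.

Definition S1of (pre : lstate Tx) (R : seq (msg Tx)) : iset Tx :=
  fun x => lS pre x \/ exists m, List.In m R /\ List.In x m.

Record SFw := { w4 : option (block Tx); w7 : option (block Tx); w5 : bool; w8 : bool;
  wS3 : iset Tx; wS5 : iset Tx; wS7 : iset Tx }.

Definition Ffin (L : seq Tx) (b : block Tx) := finupd (chainTx b) L.

Lemma foldl_fin (fl : seq (block Tx)) L0 :
  foldl Ffin L0 fl = L0 \/ exists b, List.In b fl /\ foldl Ffin L0 fl = chainTx b.
Proof.
elim: fl L0 => [|b fl IH] L0 /=; first by left.
have [->|[b' [Hb' ->]]] := IH (Ffin L0 b).
  rewrite /Ffin /finupd; case: ifP => _; first by left.
  by right; exists b; split; [left|].
by right; exists b'; split; [right|].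
Qed.

Record slotok (i t : nat) (pre : lstate Tx) (R : seq (msg Tx)) (post : lstate Tx)
   (out : msg Tx -> Prop) (w : SFw) : Prop := {
 sf_post : forall x, lS post x -> S1of pre R x \/ out [:: x];
 sf_out : forall m x, out m -> List.In x m ->
     S1of pre R x \/ (exists B, x = IBlock B) \/
     (exists b, x = IVote i b /\ (w4 w = Some b \/ w7 w = Some b)) \/
     (x = INull Tx i (lv pre) /\ w5 w) \/ (x = INull Tx i (lv post) /\ w8 w);
 sf_S3 : forall x, wS3 w x -> S1of pre R x \/ exists B, x = IBlock B;
 sf_S5 : forall x, wS5 w x -> wS3 w x \/ (exists b, w4 w = Some b /\ x = IVote i b) \/
                              (w5 w /\ x = INull Tx i (lv pre));
 sf_S7 : forall x, wS7 w x -> wS5 w x \/ (exists b, w7 w = Some b /\ x = IVote i b);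
 sf_o4 : forall b, w4 w = Some b -> [/\ valid n f (wS3 w) (lv pre) b, lnot pre = None,
            lnull pre = false & (lv post = lv pre -> lnot post = Some b)];
 sf_o7 : forall b, w7 w = Some b -> [/\ hasM n f (wS5 w) b, view b < lv post, lv pre <= view b &
            (view b = lv pre -> [/\ lnot pre = None, lnull pre = false, w4 w = None & w5 w = false])];
 sf_n5 : w5 w -> [/\ lnull pre = false, lnot pre = None & w4 w = None];
 sf_n8 : w8 w -> lnull post = true /\ exists b0, lnot post = Some b0 /\
            signers n (fun k => wS7 w (INull Tx k (lv post)) \/
               exists b', [/\ wS7 w (IVote k b'), view b' = lv post & b' <> b0]) (2 * f + 1);
 sf_mono : lv pre <= lv post;
 sf_sent4 : forall b, w4 w = Some b -> out [:: IVote i b];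
 sf_sent5 : w5 w -> out [:: INull Tx i (lv pre)];
 sf_sent7 : forall b, w7 w = Some b -> out [:: IVote i b];
 sf_stay : lv post = lv pre -> [/\ lnot post = (if w4 w is Some b then Some b else lnot pre),
            lnull post = lnull pre || w5 w || w8 w & w7 w = None];
 sf_pend : forall b, lpend post b -> lpend pre b \/ hasL n f (lS post) b;
 sf_log : llog post = llog pre \/ exists b, (lpend pre b \/ hasL n f (lS post) b) /\ llog post = chainTx b
}.

Lemma slot_facts i t pre R rtx post out :
  slot n f lexlt Delta i t pre R rtx post out -> exists w, slotok i t pre R post out w.
Proof.
move=> [prop3 [vote4 [vote7 [null5 [null8 [nd6 [nd7 [nt6 [nt7 [v6 [e6 [v7 [e7 [fl H]]]]]]]]]]]]]].
move: H => [H3 [H4a [H4b [H5 [H6a [H6b [H7a [H7b [H8a [H8b [Hfl1 [Hfl2 [Hpost Hout]]]]]]]]]]]]].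
set S1 := (fun x : item Tx => lS pre x \/ (exists m : msg Tx, List.In m R /\ List.In x m)) in H3 H4a H4b H6a H6b H7a H7b H8a H8b Hfl2 Hpost Hout.
set S3 := addo S1 (omap (IBlock (Tx:=Tx)) prop3) in H4a H4b H6a H6b H7a H7b H8a H8b Hfl2 Hpost.
set S5 := addo (addo S3 (omap (IVote i) vote4)) (if null5 then Some (INull Tx i (lv pre)) else None) in H6a H6b H7a H7b H8a H8b Hfl2 Hpost.
set S7 := addo S5 (omap (IVote i) vote7) in H8a H8b Hfl2 Hpost.
subst post.
have Hv6 : (hasN n f S5 (lv pre) /\ [/\ v6 = (lv pre).+1, e6 = t, nd6 = false & nt6 = None]) \/
           (~ hasN n f S5 (lv pre) /\ [/\ v6 = lv pre, e6 = lent pre, nd6 = lnull pre || null5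
      & nt6 = match vote4 with Some b => Some b | None => lnot pre end]).
  by case: (classic (hasN n f S5 (lv pre))) => hN; [left; split => //; apply: H6a | right; split => //; apply: H6b].
have Hv7 : v7 = v6.+1 \/ [/\ vote7 = None, v7 = v6, e7 = e6, nd7 = nd6 & nt7 = nt6].
  case: (classic (exists b, view b = v6 /\ hasM n f S5 b)) => hc.
    by have [b [_ _ _ ? _]] := H7a hc; left.
  by right; apply: H7b.
have Hstay : v7 = lv pre -> [/\ vote7 = None, nt7 = (if vote4 is Some b then Some b else lnot pre)
       & nd7 = lnull pre || null5].
  move=> e.
  case: Hv6 => [[_ [e6' _ _ _]]|[_ [e6' _ Hnd Hnt]]].
    by exfalso; case: Hv7 => [e7'|[_ e7' _ _ _]]; move: e; rewrite e7' e6'; lia.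
  case: Hv7 => [e7'|[? e7' _ -> ->]]; last by rewrite Hnd Hnt.
  by exfalso; move: e; rewrite e7' e6'; lia.
exists {| w4 := vote4; w7 := vote7; w5 := null5; w8 := null8; wS3 := S3; wS5 := S5; wS7 := S7 |}.
split => /=.
- move=> x [[[[[Hx|Hx]|Hx]|Hx]|Hx]|Hx]; first by left.
  + right; apply/Hout; move: Hx; case E3: prop3 => [B|] //= [<-]; right; left; by exists B.
  + right; apply/Hout; move: Hx; case E4: vote4 => [b|] //= [<-]; do 2 right; left; by exists b.
  + right; apply/Hout; move: Hx; case: ifP => // Hn [<-]; do 3 right; left; by split.
  + right; apply/Hout; move: Hx; case E7: vote7 => [b|] //= [<-]; do 4 right; left; by exists b.
  + right; apply/Hout; move: Hx; case: ifP => // Hn [<-]; do 5 right; by split.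
- move=> m x /Hout [H12|[[B [_ ->]]|[[b [Hb ->]]|[[Hn ->]|[[b [Hb ->]]|[Hn ->]]]]]] /= Hin.
  + case: H12 => [[w [J [_ _ [_ _ _ HJ _] Em]]]|[[b [J [_ _ [_ _ _ HJ _] Em]]]|[b [J [_ _ [_ _ _ HJ _] Em]]]]];
    move: Hin; rewrite Em => /List.in_map_iff [j [<- /In_mem /HJ Hj]]; by left.
  + case: Hin => [<-|[]]; right; left; by exists B.
  + case: Hin => [<-|[]]; do 2 right; left; exists b; split => //; by left.
  + case: Hin => [<-|[]]; do 3 right; left; by split.
  + case: Hin => [<-|[]]; do 2 right; left; exists b; split => //; by right.
  + case: Hin => [<-|[]]; do 4 right; by split.
- move=> x [Hx|Hx]; first by left.
  right; move: Hx; case E3: prop3 => [B|] //= [<-]; by exists B.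
- move=> x [[Hx|Hx]|Hx]; first by left.
  + right; left; move: Hx; case E4: vote4 => [b|] //= [<-]; by exists b.
  + right; right; move: Hx; case: ifP => // Hn [<-]; by split.
- move=> x [Hx|Hx]; first by left.
  right; move: Hx; case E7: vote7 => [b|] //= [<-]; by exists b.
- move=> b Hb.
  case: (classic ((exists b, valid n f S3 (lv pre) b) /\ lnot pre = None /\ lnull pre = false)) => hc; last by rewrite (H4b hc) in Hb.
  have [b' [Hv Hb']] := H4a hc; rewrite Hb in Hb'; case: Hb' => Eb; subst b'.
  case: hc => _ [h1 h2]; split => // e.
  by have [_ -> _] := Hstay e; rewrite Hb.
- move=> b Hb.
  case: (classic (exists b, view b = v6 /\ hasM n f S5 b)) => hc; last by case: (H7b hc) => E7 _ _ _ _; rewrite E7 in Hb.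
  have [b' [Hvb HM E7 Ev7 _]] := H7a hc.
  move: Hb; rewrite E7; case: ifP => // Hc [<-].
  split => //; first by rewrite Ev7 Hvb; lia.
  + case: Hv6 => [[_ [e6' _ _ _]]|[_ [e6' _ _ _]]]; lia.
  + move=> e; case: Hv6 => [[_ [e6' _ _ _]]|[_ [e6' _ Hnd Hnt]]]; first lia.
    move: Hc; rewrite Hnd Hnt; case E4: vote4 => [b4|] //=.
    case: (lnot pre) => //=; case: (lnull pre) => //; case: (null5) => //.
- move=> Hn; move: H5; rewrite Hn => /esym /and3P [_ Hl Hnt].
  move: Hnt; case E4: vote4 => [b4|] //=; case El: (lnot pre) => //= _.
  by split => //; apply/negbTE.
- move=> Hn8; split; first by rewrite Hn8 orbT.
  move: H8b; rewrite Hn8 => H8b'.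
  have hc := NNPP _ (fun h => Bool.diff_true_false (H8b' h)).
  case: hc => Hnd7 Hnt7 Hsig.
  move: Hnt7; case Ent: nt7 => [b0|] // _.
  exists b0; split => //.
  refine (signers_mono Hsig _) => j [Hj|[b' [H1 H2 H3']]]; first by left.
  right; exists b'; split => // e; apply: H3'; by rewrite Ent e.
- case: Hv7 => [e7'|[_ e7' _ _ _]]; case: Hv6 => [[_ [e6' _ _ _]]|[_ [e6' _ _ _]]]; lia.
- move=> b Hb; apply/Hout; do 2 right; left; by exists b.
- move=> H; apply/Hout; do 3 right; left; by split.
- move=> b Hb; apply/Hout; do 4 right; left; by exists b.
- move=> e; have [-> -> ->] := Hstay e; by split.
- move=> b [[Hb|[Hb _]] _]; [left|right] => //.
- have := foldl_fin fl (llog pre); rewrite /Ffin => -[e|[b [Hb e]]]; first by left.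
  right; exists b; split; last exact: e.
  have [[H|[H _]] _] := (Hfl2 b).1 Hb; [left|right] => //.
Qed.

Lemma ex_min (P : nat -> Prop) : (exists t, P t) -> exists t, P t /\ forall t', t' < t -> ~ P t'.
Proof.
move=> [t Ht].
suff H : forall N t, t <= N -> P t -> exists t, P t /\ forall t', t' < t -> ~ P t'.
  exact: (H t t (leqnn t) Ht).
elim=> [|N IH] t0 Hle Ht0.
  exists t0; split => // t' Hlt; lia.
case: (classic (exists t', t' < t0 /\ P t')) => [[t' [Hlt Ht']]|Hno].
  apply: (IH t') => //; lia.
exists t0; split => // t' Hlt Ht'; apply: Hno; by exists t'.
Qed.

Lemma strong_ind (P : nat -> Prop) : (forall t, (forall t', t' < t -> P t') -> P t) -> forall t, P t.
Proof.
move=> H t; suff: forall N t, t <= N -> P t by move/(_ t t (leqnn t)).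
elim=> [|N IH] t0 Hle; apply: H => t' Hlt; first lia.
apply: IH; lia.
Qed.

Hypothesis HE : is_execution n f lexlt Delta E.
Hypothesis Hn : 5 * f + 1 <= n.

Definition preS j t := if t is t'.+1 then st E j t' else init_state Tx n.

Lemma slotE j t : correct n E j ->
  exists w, slotok j t (preS j t) (deliv E j t) (st E j t) (sent E j t) w.
Proof. move=> Hj; case: HE => _ Hs _ _; apply: slot_facts; exact: (Hs j t Hj). Qed.

Lemma recvE j t m x : correct n E j -> List.In m (deliv E j t) -> List.In x m ->
  wf_item x /\ authentic n E t x.
Proof. move=> Hj Hm Hx; case: HE => _ _ _ Ha; exact: Ha Hj Hm Hx. Qed.

Definition SentI j t x := exists m, sent E j t m /\ List.In x m.

Definition goodx (T : nat -> Prop) (x : item Tx) : Prop :=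
  match x with
  | IVote k b => correct n E k -> b = Gen Tx \/ exists2 t0, T t0 & SentI k t0 x
  | INull k w => correct n E k -> exists2 t0, T t0 & SentI k t0 x
  | IBlock _ => True
  end.

Lemma goodx_mono (T T' : nat -> Prop) x : (forall t, T t -> T' t) -> goodx T x -> goodx T' x.
Proof.
move=> H; case: x => [b|k b|k w] //=.
- move=> G /G [->|[t0 Ht Hs]]; [by left | right; exists t0 => //; exact: H].
- move=> G /G [t0 Ht Hs]; exists t0 => //; exact: H.
Qed.

Lemma good_S1 j t x : correct n E j ->
  (forall y, lS (preS j t) y -> goodx (fun t0 => t0 < t) y) ->
  S1of (preS j t) (deliv E j t) x -> goodx (fun t0 => t0 < t) x.
Proof.
move=> Hj Hpre [Hx|[m [Hm Hx]]]; first exact: Hpre.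
have [_ Ha] := recvE Hj Hm Hx.
case: x Hx Ha => [b|k b|k w] //= Hx.
- move=> [_ [_ [->|[Hc|[t0 [m0 [Ht Hs Hi]]]]]]] [_ Hk]; first by left.
  + by rewrite Hc in Hk.
  + right; exists t0 => //; by exists m0.
- move=> [_ [Hc|[t0 [m0 [Ht Hs Hi]]]]] [_ Hk].
  + by rewrite Hc in Hk.
  + exists t0 => //; by exists m0.
Qed.

Lemma good_step j t : correct n E j ->
  (forall y, lS (preS j t) y -> goodx (fun t0 => t0 < t) y) ->
  forall x, lS (st E j t) x -> goodx (fun t0 => t0 <= t) x.
Proof.
move=> Hj Hpre x Hx.
have [w Hw] := slotE t Hj.
have HS1 : S1of (preS j t) (deliv E j t) x -> goodx (fun t0 => t0 <= t) x.
  move=> H; apply: goodx_mono (good_S1 Hj Hpre H) => t0; lia.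
case: (sf_post Hw Hx) => [H|Ho]; first exact: HS1 H.
case: (sf_out Hw Ho (or_introl erefl)) => [H|[[B ->]//|[[b [Ex _]]|[[Ex _]|[Ex _]]]]]; first exact: HS1 H.
all: subst x.
- move=> _ /=; right; exists t => //; exists [:: IVote j b]; split => //; by left.
- move=> _ /=; exists t => //; exists [:: INull Tx j (lv (preS j t))]; split => //; by left.
- move=> _ /=; exists t => //; exists [:: INull Tx j (lv (st E j t))]; split => //; by left.
Qed.

Lemma good_st j t x : correct n E j -> lS (st E j t) x -> goodx (fun t0 => t0 <= t) x.
Proof.
move=> Hj; elim: t x => [|t IH] x; apply: good_step => // y.
  by move=> [k _ ->] /= _; left.
Qed.

Lemma good_pre j t y : correct n E j -> lS (preS j t) y -> goodx (fun t0 => t0 < t) y.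
Proof.
move=> Hj; case: t => [|t] /=.
  by move=> [k _ ->] /= _; left.
move=> /(good_st Hj); apply: goodx_mono => t0; lia.
Qed.

Lemma good_S1' j t x : correct n E j ->
  S1of (preS j t) (deliv E j t) x -> goodx (fun t0 => t0 < t) x.
Proof. move=> Hj; apply: good_S1 => // y; exact: good_pre. Qed.

Definition SentV j t b := SentI j t (IVote j b).
Definition SentN j t v := SentI j t (INull Tx j v).

Lemma first_sent (P : nat -> Prop) t : P t -> exists u, [/\ u <= t, P u & forall t', t' < u -> ~ P t'].
Proof.
move=> Ht; have [u [Hu Hmin]] := ex_min (ex_intro _ t Ht).
exists u; split => //; case: (leqP u t) => // Hlt; by case: (Hmin t Hlt).
Qed.

Lemma first_vote j t b w : correct n E j ->
  slotok j t (preS j t) (deliv E j t) (st E j t) (sent E j t) w ->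
  SentV j t b -> b <> Gen Tx -> (forall t', t' < t -> ~ SentV j t' b) ->
  w4 w = Some b \/ w7 w = Some b.
Proof.
move=> Hj Hw [m [Hm Hi]] Hb Hf.
case: (sf_out Hw Hm Hi) => [H|[[B Eb]|[[b' [Eb H]]|[[Eb _]|[Eb _]]]]]; try discriminate.
- have := good_S1' Hj H => /= /(_ Hj) [//|[t0 Ht0 Hs]]; by case: (Hf t0 Ht0 Hs).
- by case: Eb => Eb; subst b'.
Qed.

Lemma first_null j t v w : correct n E j ->
  slotok j t (preS j t) (deliv E j t) (st E j t) (sent E j t) w ->
  SentN j t v -> (forall t', t' < t -> ~ SentN j t' v) ->
  (v = lv (preS j t) /\ w5 w) \/ (v = lv (st E j t) /\ w8 w).
Proof.
move=> Hj Hw [m [Hm Hi]] Hf.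
case: (sf_out Hw Hm Hi) => [H|[[B Eb]|[[b' [Eb H]]|[[Eb H]|[Eb H]]]]]; try discriminate.
- have := good_S1' Hj H => /= /(_ Hj) [t0 Ht0 Hs]; by case: (Hf t0 Ht0 Hs).
- by case: Eb => ->; left.
- by case: Eb => ->; right.
Qed.

Definition LN b := exists k t, correct n E k /\ hasL n f (lS (st E k t)) b.

Definition Inv j (s : lstate Tx) (T : nat -> Prop) : Prop :=
 [/\ 1 <= lv s,
  (forall t' b, T t' -> SentV j t' b -> view b < lv s \/ (view b = lv s /\ lnot s = Some b)),
  (forall t' v, T t' -> SentN j t' v -> v < lv s \/ (v = lv s /\ lnull s = true)),
  (forall b, lpend s b -> LN b) &
  (llog s = [::] \/ exists b, LN b /\ llog s = chainTx b)].

Lemma inv_step j t : correct n E j -> Inv j (preS j t) (fun t' => t' < t) ->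
  Inv j (st E j t) (fun t' => t' <= t).
Proof.
move=> Hj [H0 HV HN HP HL]; have [w Hw] := slotE t Hj.
have Hmono := sf_mono Hw.
have propV : forall b, view b < lv (preS j t) \/ (view b = lv (preS j t) /\ lnot (preS j t) = Some b) ->
    view b < lv (st E j t) \/ (view b = lv (st E j t) /\ lnot (st E j t) = Some b).
  move=> b [Hl|[He Hn']]; first by left; lia.
  have [Hlt|Heq] : lv (preS j t) < lv (st E j t) \/ lv (st E j t) = lv (preS j t) by lia.
    by left; lia.
  right; split; first lia.
  have [-> _ _] := sf_stay Hw Heq.
  case E4: (w4 w) => [b4|] //; have [_ Hn0 _ _] := sf_o4 Hw E4; by rewrite Hn0 in Hn'.
have propN : forall v, v < lv (preS j t) \/ (v = lv (preS j t) /\ lnull (preS j t) = true) ->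
    v < lv (st E j t) \/ (v = lv (st E j t) /\ lnull (st E j t) = true).
  move=> v [Hl|[He Hn']]; first by left; lia.
  have [Hlt|Heq] : lv (preS j t) < lv (st E j t) \/ lv (st E j t) = lv (preS j t) by lia.
    by left; lia.
  right; split; first lia.
  by have [_ -> _] := sf_stay Hw Heq; rewrite Hn'.
split.
- lia.
- move=> t' b Ht' Hs.
  have [Hlt|Et] : t' < t \/ t' = t by lia.
    by apply: propV; exact: HV Hs.
  subst t'; move: Hs => [m [Hm Hi]].
  case: (sf_out Hw Hm Hi) => [H|[[B Eb]|[[b' [Eb [E4|E7]]]|[[Eb _]|[Eb _]]]]]; try discriminate.
  + have := good_S1' Hj H => /= /(_ Hj) [Eg|[t0 Ht0 Hs0]].
      by left; subst b; rewrite /=; lia.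
    by apply: propV; exact: HV Hs0.
  + case: Eb => Eb; subst b'.
    have [[_ Hvw _ _] _ _ Hst] := sf_o4 Hw E4.
    have [Hlt|Heq] : lv (preS j t) < lv (st E j t) \/ lv (st E j t) = lv (preS j t) by lia.
      by left; lia.
    right; split; [lia | exact: Hst Heq].
  + case: Eb => Eb; subst b'.
    have [_ Hlt _ _] := sf_o7 Hw E7; by left.
- move=> t' v Ht' Hs.
  have [Hlt|Et] : t' < t \/ t' = t by lia.
    by apply: propN; exact: HN Hs.
  subst t'; move: Hs => [m [Hm Hi]].
  case: (sf_out Hw Hm Hi) => [H|[[B Eb]|[[b' [Eb _]]|[[Eb H5]|[Eb H8]]]]]; try discriminate.
  + have := good_S1' Hj H => /= /(_ Hj) [t0 Ht0 Hs0].
    by apply: propN; exact: HN Hs0.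
  + case: Eb => ->.
    have [Hlt|Heq] : lv (preS j t) < lv (st E j t) \/ lv (st E j t) = lv (preS j t) by lia.
      by left; lia.
    right; split; first lia.
    by have [_ -> _] := sf_stay Hw Heq; rewrite H5 orbT.
  + case: Eb => ->; right; split => //; exact: (sf_n8 Hw H8).1.
- move=> b /(sf_pend Hw) [/HP //|HL']; by exists j, t.
- case: (sf_log Hw) => [->//|[b [[Hp|HL'] ->]]]; right; exists b; split => //.
  + exact: HP.
  + by exists j, t.
Qed.

Lemma inv_st j t : correct n E j -> Inv j (st E j t) (fun t' => t' <= t).
Proof.
move=> Hj; elim: t => [|t IH]; apply: inv_step => //.
split => //=; try (by move=> t' ?; lia); try (by left); by [].
Qed.

Lemma inv_pre j t : correct n E j -> Inv j (preS j t) (fun t' => t' < t).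
Proof.
move=> Hj; case: t => [|t]; last exact: inv_st.
split => //=; try (by move=> t' ?; lia); try (by left); by [].
Qed.

Lemma view_pos j t b : correct n E j -> SentV j t b -> b <> Gen Tx -> 1 <= view b.
Proof.
move=> Hj Hs Hb; have [u [_ Hu Hf]] := first_sent (P := fun u => SentV j u b) Hs.
have [w Hw] := slotE u Hj.
have [H0 _ _ _ _] := inv_pre u Hj.
case: (first_vote Hj Hw Hu Hb Hf) => [E4|E7].
- have [[_ Hvw _ _] _ _ _] := sf_o4 Hw E4; lia.
- have [_ _ Hle _] := sf_o7 Hw E7; lia.
Qed.

Lemma vote_unique_aux j u1 u2 b1 b2 : correct n E j ->
  SentV j u1 b1 -> (forall t', t' < u1 -> ~ SentV j t' b1) ->
  SentV j u2 b2 -> (forall t', t' < u2 -> ~ SentV j t' b2) ->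
  u1 <= u2 -> b1 <> Gen Tx -> b2 <> Gen Tx -> view b1 = view b2 -> b1 = b2.
Proof.
move=> Hj Hs1 Hf1 Hs2 Hf2 Hle Hb1 Hb2 Hv.
have [w Hw] := slotE u2 Hj.
have F2 := first_vote Hj Hw Hs2 Hb2 Hf2.
have [Hlt|Eu] : u1 < u2 \/ u1 = u2 by lia.
  have [_ HV _ _ _] := inv_pre u2 Hj.
  have := HV u1 b1 Hlt Hs1.
  case: F2 => [E4|E7].
  - have [[_ Hvw _ _] Hn0 _ _] := sf_o4 Hw E4.
    rewrite Hn0 => -[|[_ //]]; lia.
  - have [_ _ Hle' Heq] := sf_o7 Hw E7.
    move=> [|[He Hn']]; first lia.
    have [Hn0 _ _ _] := Heq ltac:(lia); by rewrite Hn0 in Hn'.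
subst u2.
have F1 := first_vote Hj Hw Hs1 Hb1 Hf1.
case: F1 => [E4|E7]; case: F2 => [E4'|E7'].
- by rewrite E4 in E4'; case: E4'.
- have [[_ Hvw _ _] _ _ _] := sf_o4 Hw E4.
  have [_ _ _ Heq] := sf_o7 Hw E7'.
  have [_ _ H4 _] := Heq ltac:(lia); by rewrite H4 in E4.
- have [[_ Hvw _ _] _ _ _] := sf_o4 Hw E4'.
  have [_ _ _ Heq] := sf_o7 Hw E7.
  have [_ _ H4 _] := Heq ltac:(lia); by rewrite H4 in E4'.
- by rewrite E7 in E7'; case: E7'.
Qed.

Lemma vote_unique j t1 t2 b1 b2 : correct n E j -> SentV j t1 b1 -> SentV j t2 b2 ->
  b1 <> Gen Tx -> b2 <> Gen Tx -> view b1 = view b2 -> b1 = b2.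
Proof.
move=> Hj Hs1 Hs2 Hb1 Hb2 Hv.
have [u1 [_ Hu1 Hf1]] := first_sent (P := fun u => SentV j u b1) Hs1.
have [u2 [_ Hu2 Hf2]] := first_sent (P := fun u => SentV j u b2) Hs2.
case: (leqP u1 u2) => Hle.
  exact: (vote_unique_aux Hj Hu1 Hf1 Hu2 Hf2).
apply: esym; apply: (vote_unique_aux Hj Hu2 Hf2 Hu1 Hf1) => //; lia.
Qed.

Lemma no_vote_after_null j t u b : correct n E j -> SentN j t (view b) ->
  SentV j u b -> (forall t', t' < u -> ~ SentV j t' b) -> b <> Gen Tx -> t < u -> False.
Proof.
move=> Hj HsN Hs Hf Hb Hlt.
have [w Hw] := slotE u Hj.
have [_ _ HN _ _] := inv_pre u Hj.
have := HN t (view b) Hlt HsN.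
case: (first_vote Hj Hw Hs Hb Hf) => [E4|E7].
- have [[_ Hvw _ _] _ Hl0 _] := sf_o4 Hw E4.
  rewrite Hl0 => -[|[_ //]]; lia.
- have [_ _ Hle Heq] := sf_o7 Hw E7.
  move=> [|[He Hn']]; first lia.
  have [_ Hl0 _ _] := Heq ltac:(lia); by rewrite Hl0 in Hn'.
Qed.

Lemma count_sub (p : pred nat) (J : seq nat) : uniq J -> all (fun j => j < n) J ->
  count p J <= count p (iota 0 n).
Proof.
move=> U A; rewrite -!size_filter; apply: uniq_leq_size; first exact: filter_uniq.
move=> x; rewrite !mem_filter mem_iota add0n => /andP [-> Hx] /=.
exact: (allP A x Hx).
Qed.

Lemma quorum (J1 J2 : seq nat) : uniq J1 -> uniq J2 -> all (fun j => j < n) J1 -> all (fun j => j < n) J2 ->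
  n + f < size J1 + size J2 -> exists k, [/\ correct n E k, k \in J1 & k \in J2].
Proof.
have Hc : count (corrupt E) (iota 0 n) <= f by case: HE.
move=> U1 U2 A1 A2 Hs.
case: (boolP (has (mem (filter (predC (corrupt E)) J1)) (filter (predC (corrupt E)) J2))) => [/hasP [k Hk2 Hk1]|Hno].
  rewrite /= !mem_filter in Hk1 Hk2; case/andP: Hk1 => Hc1 Hk1; case/andP: Hk2 => _ Hk2.
  exists k; split => //; split; [exact: (allP A1 k Hk1) | exact: Hc1].
exfalso.
have Hu : uniq (filter (predC (corrupt E)) J1 ++ filter (predC (corrupt E)) J2).
  by rewrite cat_uniq !filter_uniq // Hno.
have Hsub : {subset filter (predC (corrupt E)) J1 ++ filter (predC (corrupt E)) J2 <=
            filter (predC (corrupt E)) (iota 0 n)}.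
  move=> x; rewrite mem_cat !mem_filter mem_iota add0n => /orP [/andP [-> Hx]|/andP [-> Hx]] /=.
  - exact: (allP A1 x Hx).
  - exact: (allP A2 x Hx).
have := uniq_leq_size Hu Hsub; rewrite size_cat !size_filter.
have e1 := count_predC (corrupt E) J1.
have e2 := count_predC (corrupt E) J2.
have e3 := count_predC (corrupt E) (iota 0 n); rewrite size_iota in e3.
have c1 := count_sub (corrupt E) U1 A1.
have c2 := count_sub (corrupt E) U2 A2.
move: e1 e2 e3 c1 c2 Hc Hs.
set a1 := count (corrupt E) J1. set a2 := count (corrupt E) J2. set a3 := count (corrupt E) (iota 0 n).
set b1 := count (predC (corrupt E)) J1. set b2 := count (predC (corrupt E)) J2. set b3 := count (predC (corrupt E)) (iota 0 n).
lia.
Qed.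

Lemma all_iota : all (fun j => j < n) (iota 0 n).
Proof. by apply/allP => x; rewrite mem_iota add0n => /andP [_ ->]. Qed.

Lemma one_correct (J : seq nat) : uniq J -> all (fun j => j < n) J -> f < size J ->
  exists k, correct n E k /\ k \in J.
Proof.
move=> U A Hs.
have [k [Hk H1 _]] := quorum U (iota_uniq 0 n) A all_iota ltac:(rewrite size_iota; lia).
by exists k.
Qed.

Definition GL b k (J : seq nat) := [/\ uniq J, size J = k, all (fun j => j < n) J &
  forall j, j \in J -> correct n E j -> exists t, SentV j t b].

Definition goodS (S : iset Tx) := forall x, S x -> goodx (fun _ => True) x.

Lemma signers_GL S b k : goodS S -> b <> Gen Tx ->
  signers n (fun j => S (IVote j b)) k -> exists J, GL b k J.
Proof.
move=> G Hb [J [U Sz A H]]; exists J; split => // j Hj Hc.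
by have := G _ (H j Hj) Hc => -[//|[t0 _ Hs]]; exists t0.
Qed.

Lemma same_view b1 b2 k1 k2 J1 J2 : GL b1 k1 J1 -> GL b2 k2 J2 -> n + f < k1 + k2 ->
  b1 <> Gen Tx -> b2 <> Gen Tx -> view b1 = view b2 -> b1 = b2.
Proof.
move=> [U1 S1 A1 H1] [U2 S2 A2 H2] Hs Hb1 Hb2 Hv.
have [k [Hk Hk1 Hk2]] := quorum U1 U2 A1 A2 ltac:(lia).
have [t1 Hs1] := H1 k Hk1 Hk; have [t2 Hs2] := H2 k Hk2 Hk.
exact: vote_unique Hk Hs1 Hs2 Hb1 Hb2 Hv.
Qed.

Lemma good_S357 j t w : correct n E j ->
  slotok j t (preS j t) (deliv E j t) (st E j t) (sent E j t) w ->
  [/\ goodS (wS3 w), goodS (wS5 w) & goodS (wS7 w)].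
Proof.
move=> Hj Hw.
have G3 : goodS (wS3 w).
  move=> x /(sf_S3 Hw) [H|[B ->]] //; exact: goodx_mono (good_S1' Hj H).
have G5 : goodS (wS5 w).
  move=> x /(sf_S5 Hw) [H|[[b4 [E4 ->]]|[H5 ->]]]; first exact: G3.
  - move=> _; right; exists t => //; exists [:: IVote j b4]; split; [exact (sf_sent4 Hw E4) | by left].
  - move=> _; exists t => //; exists [:: INull Tx j (lv (preS j t))]; split; [exact (sf_sent5 Hw H5) | by left].
split => // x /(sf_S7 Hw) [H|[b7 [E7 ->]]]; first exact: G5.
move=> _; right; exists t => //; exists [:: IVote j b7]; split; [exact (sf_sent7 Hw E7) | by left].
Qed.

Lemma vote_valid t k b : correct n E k -> SentV k t b -> b <> Gen Tx ->
  exists S, goodS S /\ valid n f S (view b) b.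
Proof.
move: t k b; elim/strong_ind => t IH k b Hk Hs Hb.
have [u [Hut Hu Hfu]] := first_sent (P := fun u => SentV k u b) Hs.
have [w Hw] := slotE u Hk.
have [G3 G5 _] := good_S357 Hk Hw.
have case4 : w4 w = Some b -> exists S, goodS S /\ valid n f S (view b) b.
  move=> E4; have [Hv _ _ _] := sf_o4 Hw E4.
  have [_ Hvw _ _] := Hv; exists (wS3 w); split => //; by rewrite Hvw.
case: (first_vote Hk Hw Hu Hb Hfu) => [|E7]; first exact: case4.
have [[J [U Sz A H]] _ _ _] := sf_o7 Hw E7.
have [k' [Hk' Hk'J]] := one_correct U A ltac:(lia).
have HS5 := H k' Hk'J.
case: (sf_S5 Hw HS5) => [H3|[[b4 [E4 Eb]]|[_ Eb]]]; last discriminate.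
- case: (sf_S3 Hw H3) => [H1|[B Eb]]; last discriminate.
  have := good_S1' Hk H1 => /= /(_ Hk') [//|[t0 Ht0 Hs0]].
  apply: (IH t0 _ k') => //; lia.
- case: Eb => _ Eb; subst b4; exact: case4.
Qed.

Lemma no_null b1 J1 : GL b1 (n - f) J1 -> b1 <> Gen Tx ->
  forall (J2 : seq nat), uniq J2 -> size J2 = 2 * f + 1 -> all (fun j => j < n) J2 ->
  (forall j, j \in J2 -> correct n E j -> exists t, SentN j t (view b1)) -> False.
Proof.
move=> [U1 S1 A1 HJ1] Hb J2 U2 S2 A2 HJ2.
have [k [Hk Hk1 Hk2]] := quorum U1 U2 A1 A2 ltac:(lia).
have [t0 Ht0] := HJ2 k Hk2 Hk.
have [t [[j [Hj [tv Hv] HN]] Hmin]] :=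
  ex_min (P := fun t => exists j, [/\ correct n E j, exists tv, SentV j tv b1 & SentN j t (view b1)])
   (ex_intro _ t0 (ex_intro _ k (And3 Hk (HJ1 k Hk1 Hk) Ht0))).
have Hfirst : forall t', t' < t -> ~ SentN j t' (view b1).
  move=> t' lt h; apply: (Hmin t' lt); exists j; split => //; by exists tv.
have [u [_ Hu Hfu]] := first_sent (P := fun u => SentV j u b1) Hv.
have Hut : u <= t.
  case: (leqP u t) => // lt; exfalso; exact: no_vote_after_null Hj HN Hu Hfu Hb lt.
have [ww Hw] := slotE t Hj.
have n5c : ~ (view b1 = lv (preS j t) /\ w5 ww).
  move=> [Ew H5]; have [Hl0 Hn0 H40] := sf_n5 Hw H5.
  have [Hlt|Eu] : u < t \/ u = t by lia.
    have [_ HV _ _ _] := inv_pre t Hj.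
    have := HV u b1 Hlt Hu; rewrite Hn0 => -[|[_ //]]; lia.
  subst u; case: (first_vote Hj Hw Hu Hb Hfu) => [E4|E7]; first by rewrite H40 in E4.
  have [_ _ _ Heq] := sf_o7 Hw E7.
  have [_ _ _ H5'] := Heq Ew; by rewrite H5' in H5.
case: (first_null Hj Hw HN Hfirst) => [H5|[Ew H8]]; first exact: n5c H5.
have [_ [b0 [Hnot Hsig]]] := sf_n8 Hw H8.
have Eb0 : b0 = b1.
  have [_ HV _ _ _] := inv_st t Hj.
  have := HV u b1 Hut Hu; rewrite Hnot => -[|[_ [->]]] //; lia.
subst b0.
move: Hsig => [J3 [U3 S3 A3 H3]].
have [k' [Hk' Hk'1 Hk'3]] := quorum U1 U3 A1 A3 ltac:(lia).
have [t1 Hv1] := HJ1 k' Hk'1 Hk'.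
have [G3 G5 G7] := good_S357 Hj Hw.
case: (H3 k' Hk'3) => [HnS|[b' [HvS Hvb' Hneq]]].
- case: (sf_S7 Hw HnS) => [H5'|[b7 [_ Eb]]]; last discriminate.
  case: (sf_S5 Hw H5') => [H3'|[[b4 [_ Eb]]|[H5 Eb]]]; [|discriminate|].
  + case: (sf_S3 Hw H3') => [H1|[B Eb]]; last discriminate.
    have := good_S1' Hj H1 => /= /(_ Hk') [t2 Ht2 Hs2].
    apply: (Hmin t2 Ht2); exists k'; split => //; first by exists t1.
    by rewrite Ew.
  + case: Eb => _ El; apply: n5c; split; [by rewrite Ew El | exact: H5].
- have := G7 _ HvS Hk' => -[Eg|[t2 _ Hs2]].
    by have := view_pos Hj Hu Hb; rewrite Ew -Hvb' Eg.
  have Hb' : b' <> Gen Tx by move=> Eg; have := view_pos Hj Hu Hb; rewrite Ew -Hvb' Eg.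
  apply: Hneq; apply: esym; apply: (vote_unique Hk' Hv1 Hs2 Hb Hb'); by rewrite Ew Hvb'.
Qed.

Fixpoint depth (b : block Tx) : nat :=
  match b with Blk _ _ (HashOf b') => (depth b').+1 | _ => 0 end.

Lemma block_ind' (P : block Tx -> Prop) :
  (forall b, (forall b', parent b = Some b' -> P b') -> P b) -> forall b, P b.
Proof.
move=> H b; suff: forall N b, depth b <= N -> P b by move/(_ (depth b) b (leqnn _)).
elim=> [|N IH] b0 Hd; apply: H => b'; case: b0 Hd => [|v tr [b1|k]] //= Hd [<-].
apply: IH; lia.
Qed.

Lemma parent_anc (b b' : block Tx) : parent b = Some b' -> anc b = b :: anc b'.
Proof. by case: b => [|v tr [b0|k]] //= [<-]. Qed.

Lemma anc_head (b : block Tx) : List.In b (anc b).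
Proof. by case: b => [|v tr [b0|k]] /=; left. Qed.

Lemma GL_pos b1 J1 : GL b1 (n - f) J1 -> b1 <> Gen Tx -> 1 <= view b1.
Proof.
move=> [U1 S1 A1 HJ1] Hb1.
have [k [Hk Hk1]] := one_correct U1 A1 ltac:(lia).
have [t Ht] := HJ1 k Hk1 Hk; exact: view_pos Hk Ht Hb1.
Qed.

Lemma ext b1 J1 : GL b1 (n - f) J1 -> b1 <> Gen Tx ->
  forall b, (exists S, goodS S /\ valid n f S (view b) b) -> view b1 < view b ->
  List.In b1 (anc b).
Proof.
move=> G1 Hb1; have Hpos := GL_pos G1 Hb1.
elim/block_ind' => b IH [S [G [_ _ _ [b'' [Hp HM HN]]]]] Hlt.
rewrite (parent_anc Hp) /=; right.
case: (ltngtP (view b'') (view b1)) => Hc.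
- exfalso.
  have : hasN n f S (view b1) by apply: HN; rewrite Hc Hlt.
  move=> [J2 [U2 S2 A2 H2]].
  apply: (no_null G1 Hb1 U2 S2 A2) => j Hj Hjc.
  by have := G _ (H2 j Hj) Hjc => -[t0 _ Hs]; exists t0.
- have Hb'' : b'' <> Gen Tx by move=> Eg; rewrite Eg /= in Hc.
  have [J [UJ SJ AJ HJ]] := HM.
  have [k [Hk HkJ]] := one_correct UJ AJ ltac:(lia).
  have := G _ (HJ k HkJ) Hk => -[//|[t0 _ Hs]].
  exact: (IH b'' Hp (vote_valid Hk Hs Hb'') Hc).
- have Hb'' : b'' <> Gen Tx by move=> Eg; rewrite Eg /= in Hc; lia.
  have [J2 G2] := signers_GL G Hb'' HM.
  have -> : b1 = b'' by apply: (same_view G1 G2) => //; lia.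
  exact: anc_head.
Qed.

Lemma LN_GL b : LN b -> b <> Gen Tx -> exists J, GL b (n - f) J.
Proof.
move=> [k [t [Hk HL]]] Hb; apply: (signers_GL _ Hb HL) => x Hx.
exact: goodx_mono (good_st Hk Hx).
Qed.

Lemma ext' b1 b2 J1 J2 : GL b1 (n - f) J1 -> GL b2 (n - f) J2 -> b1 <> Gen Tx -> b2 <> Gen Tx ->
  view b1 < view b2 -> List.In b1 (anc b2).
Proof.
move=> G1 [U2 S2 A2 HJ2] Hb1 Hb2 Hlt.
have [k [Hk Hk2]] := one_correct U2 A2 ltac:(lia).
have [t Ht] := HJ2 k Hk2 Hk.
exact: (ext G1 Hb1 (vote_valid Hk Ht Hb2) Hlt).
Qed.

Lemma safety (b1 b2 : block Tx) : LN b1 -> LN b2 -> b1 <> Gen Tx -> b2 <> Gen Tx ->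
  List.In b1 (anc b2) \/ List.In b2 (anc b1).
Proof.
move=> L1 L2 Hb1 Hb2.
have [J1 G1] := LN_GL L1 Hb1; have [J2 G2] := LN_GL L2 Hb2.
case: (ltngtP (view b1) (view b2)) => Hc.
- left; exact: ext' G1 G2 Hb1 Hb2 Hc.
- right; exact: ext' G2 G1 Hb2 Hb1 Hc.
- have E12 : b1 = b2 by apply: (same_view G1 G2) => //; lia.
  by left; rewrite E12; apply: anc_head.
Qed.

Lemma anc_split (b1 b2 : block Tx) : List.In b1 (anc b2) -> exists s, anc b2 = s ++ anc b1.
Proof.
elim/block_ind': b2 => b2 IH.
case: b2 IH => [|v tr [b0|k]] IH /=.
- by move=> [<-|[]]; exists [::].
- move=> [<-|H]; first by exists [::].
  have [s Es] := IH b0 erefl H.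
  by exists (Blk v tr (HashOf b0) :: s); rewrite Es.
- by move=> [<-|[]]; exists [::].
Qed.

Lemma undup_first_cat (X Y : seq Tx) : prefix (undup_first X) (undup_first (X ++ Y)).
Proof. rewrite /undup_first rev_cat undup_cat rev_cat; exact: prefix_prefix. Qed.

Lemma chain_prefix (b1 b2 : block Tx) : List.In b1 (anc b2) -> prefix (chainTx b1) (chainTx b2).
Proof.
move=> /anc_split [s Es]; rewrite /chainTx Es rev_cat map_cat flatten_cat.
exact: undup_first_cat.
Qed.

Lemma logs_compat i j t t' : correct n E i -> correct n E j ->
  prefix (llog (st E i t)) (llog (st E j t')) \/ prefix (llog (st E j t')) (llog (st E i t)).
Proof.
move=> Hi Hj.
have [_ _ _ _ L1] := inv_st t Hi; have [_ _ _ _ L2] := inv_st t' Hj.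
have CG : chainTx (Gen Tx) = [::] by [].
case: L1 => [->|[b1 [LN1 ->]]]; first by left; apply: prefix0s.
case: L2 => [->|[b2 [LN2 ->]]]; first by right; apply: prefix0s.
case: (classic (b1 = Gen Tx)) => [->|H1]; first by left; rewrite CG prefix0s.
case: (classic (b2 = Gen Tx)) => [->|H2]; first by right; rewrite CG prefix0s.
case: (safety LN1 LN2 H1 H2) => H; [left|right]; exact: chain_prefix H.
Qed.

End Proof.

Unset Implicit Arguments.
Set Strict Implicit.

Theorem lemma4 (Tx : eqType) (n f Delta : nat)
    (lexlt : block Tx -> block Tx -> Prop) (E : execution Tx) :
  5 * f + 1 <= n ->
  strict_total_order lexlt ->
  is_execution n f lexlt Delta E ->
  forall i j t t', correct n E i -> correct n E j ->
    prefix (llog (st E i t)) (llog (st E j t')) \/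
    prefix (llog (st E j t')) (llog (st E i t)).
Proof.
move=> Hn _ HE i j t t' Hi Hj.
exact: (@logs_compat Tx n f Delta lexlt E HE Hn i j t t' Hi Hj).
Qed.
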